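(* Let $G$ be a graph with a pendant vertex $p$, let $v$ be the neighbor of $p$, and let $G'$ be the subgraph of $G$ induced by $V(G)\setminus\{p,v\}$. (1) $G$ is $A$-AW if and only if $G'$ is $A$-AW. (2) Let $r$ be the smallest positive integer such that $T_{V(G)}^{A(G)}(r)\ne\emptyset$, and let $t\in T_{V(G)}^{A(G)}(r)$. Then $\overline{G}$ is $N$-AW if and only if both of the following hold: (a) for every labeling $\pi$ of $V(G)$ there exists $s\in\mathbb{Z}_\ell$ such that the labeling $\pi_s$ is winnable in the adjacency Lights Out game on $G$; (b) for every $z\in\mathbb{Z}_\ell$ there exists $q\in T_{V(G)}^{A(G)}(0)$ such that the congruence $(r+t)x\equiv z+q \pmod{\ell}$ has a solution $x$.
   Context: All graphs are finite and simple; $\overline{G}$ is the complement. Fix an integer $\ell\ge2$; labelings are maps $V(G)\to\mathbb{Z}_\ell$. In the neighborhood Lights Out game, toggling a vertex $w$ adds $1$ (mod $\ell$) to the label of each vertex of the closed neighborhood $N[w]$; in the adjacency Lights Out game, toggling $w$ adds $1$ to the label of each vertex of the open neighborhood $N(w)$. A game is won when all labels are $0$; a labeling is winnable if the game starting from it can be won. A graph is $N$-AW (resp. $A$-AW) if every labeling is winnable in the neighborhood (resp. adjacency) game. For a labeling $\pi$ and $s\in\mathbb{Z}_\ell$, $\pi_s$ is the labeling $\pi_s(w)=\pi(w)+s$ for all $w$. For $U\subseteq V(G)$ and $r\in\mathbb{Z}_\ell$, the set of toggling numbers $T_U^{A(G)}(r)\subseteq\mathbb{Z}_\ell$ consists of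 all $t$ such that the adjacency game on $G$ starting from the labeling that is $r$ on $U$ and $0$ elsewhere can be won by a sequence of toggles in which the vertices of $U$ are toggled a total of $t$ times (mod $\ell$). *)

(* Defs.v *)
From HB Require Import structures.
From mathcomp Require Import all_boot all_order all_algebra.
Set Implicit Arguments. Unset Strict Implicit. Unset Printing Implicit Defensive.
Import GRing.Theory.
Local Open Scope ring_scope.

(* A simple graph: vertex type T : finType, adjacency e : rel T,
   assumed symmetric and irreflexive in the theorem.
   Labels live in 'Z_l (with the hypothesis 1 < l). *)

Section LightsOut.
Variables (l : nat) (T : finType) (e : rel T).

Definition adj_toggle (pi : T -> 'Z_l) (w : T) : T -> 'Z_l :=
  fun u => pi u + (e w u)%:R.

Definition nbhd_toggle (pi : T -> 'Z_l) (w : T) : T -> 'Z_l :=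
  fun u => pi u + ((u == w) || e w u)%:R.

Definition A_play (s : seq T) (pi : T -> 'Z_l) : T -> 'Z_l :=
  foldl adj_toggle pi s.
Definition N_play (s : seq T) (pi : T -> 'Z_l) : T -> 'Z_l :=
  foldl nbhd_toggle pi s.

Definition A_winnable (pi : T -> 'Z_l) : Prop :=
  exists s : seq T, forall u, A_play s pi u = 0.
Definition N_winnable (pi : T -> 'Z_l) : Prop :=
  exists s : seq T, forall u, N_play s pi u = 0.

Definition A_AW : Prop := forall pi : T -> 'Z_l, A_winnable pi.
Definition N_AW : Prop := forall pi : T -> 'Z_l, N_winnable pi.

Definition shift_lab (pi : T -> 'Z_l) (s : 'Z_l) : T -> 'Z_l :=
  fun w => pi w + s.

Definition lab_on (U : {set T}) (r : 'Z_l) : T -> 'Z_l :=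
  fun u => if u \in U then r else 0.

Definition in_TogNum (U : {set T}) (r t : 'Z_l) : Prop :=
  exists s : seq T, (forall u, A_play s (lab_on U r) u = 0) /\
                    (count (mem U) s)%:R = t.

End LightsOut.

Definition compl_rel (T : finType) (e : rel T) : rel T :=
  fun x y => (x != y) && ~~ e x y.

Definition del2 (T : finType) (p v : T) : finType :=
  {x : T | (x != p) && (x != v)}.
Definition induced_del2 (T : finType) (e : rel T) (p v : T) : rel (del2 p v) :=
  fun x y => e (val x) (val y).
Arguments induced_del2 {T} e p v.
Arguments A_winnable l {T} e pi.
Arguments N_winnable l {T} e pi.
Arguments in_TogNum l {T} e U r t.
Arguments A_AW l {T} e.
Arguments N_AW l {T} e.

(* Main.v *)
Require Import Defs.
From mathcomp Require Import all_boot all_order all_algebra.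
From mathcomp Require Import ring.
Set Implicit Arguments. Unset Strict Implicit. Unset Printing Implicit Defensive.
Import GRing.Theory.
Local Open Scope ring_scope.

Section Aux.
Variables (l : nat) (T : finType).
Local Notation Z := 'Z_l.

Lemma foldl_sum (f : T -> T -> Z) (s : seq T) (pi : T -> Z) u :
  foldl (fun pi w => fun u => pi u + f w u) pi s u = pi u + \sum_(w <- s) f w u.
Proof.
elim: s pi => [|a s IH] pi /=; first by rewrite big_nil addr0.
by rewrite IH big_cons addrA.
Qed.

Lemma delta_sum (a : T) (F : T -> Z) : \sum_w (a == w)%:R * F w = F a.
Proof.
rewrite (bigD1 a) //= eqxx mul1r big1 ?addr0 // => w /negbTE.
by rewrite eq_sym => ->; rewrite mul0r.
Qed.

Lemma seq_vec (s : seq T) (F : T -> Z) :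
  \sum_(w <- s) F w = \sum_w (count_mem w s)%:R * F w.
Proof.
elim: s => [|a s IH]; first by rewrite big_nil big1 // => w _; rewrite mul0r.
rewrite big_cons IH.
rewrite [RHS](eq_bigr (fun w => (a == w)%:R * F w + (count_mem w s)%:R * F w)).
  by rewrite big_split /= delta_sum.
by move=> w _ /=; rewrite natrD mulrDl.
Qed.

Definition seq_of (x : T -> Z) : seq T :=
  flatten [seq nseq (x w : nat) w | w <- enum T].

Lemma vec_seq (x : T -> Z) (F : T -> Z) :
  \sum_(w <- seq_of x) F w = \sum_w x w * F w.
Proof.
rewrite /seq_of big_flatten /= big_map big_enum /=.
apply: eq_bigr => w _; rewrite big_nseq iter_addr_0 -mulr_natl.
by rewrite natr_Zp.
Qed.

Lemma count_setT (s : seq T) :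
  (count (mem [set: T]) s)%:R = \sum_(w <- s) (1 : Z).
Proof.
elim: s => [|a s IH] /=; first by rewrite big_nil.
by rewrite big_cons in_setT natrD IH.
Qed.

Lemma sum_del2 (p v : T) (F : T -> Z) : p != v ->
  \sum_w F w = F p + F v + \sum_(y : del2 p v) F (val y).
Proof.
move=> hpv; rewrite (bigD1 p) //= (bigD1 v) /=; last by rewrite eq_sym.
rewrite addrA; congr (_ + _).
rewrite (reindex_omap (val : del2 p v -> T) insub); last first.
  by move=> i /andP[ip iv]; rewrite insubT // ip iv.
apply: eq_bigl => -[i hi] /=; rewrite insubT /=.
by case/andP: (hi) => -> -> /=; rewrite eqxx.
Qed.
End Aux.

Section Main.
Variables (l : nat) (T : finType) (e : rel T).
Hypotheses (esym : symmetric e) (eirr : irreflexive e).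
Local Notation Z := 'Z_l.

Definition Av (x : T -> Z) u := \sum_w x w * (e w u)%:R.

Lemma A_play_sum s pi u : @A_play l T e s pi u = pi u + \sum_(w <- s) (e w u)%:R.
Proof. exact: (foldl_sum (fun w u => (e w u)%:R)). Qed.

Lemma A_win_iff pi : A_winnable l e pi <-> exists x, forall u, pi u + Av x u = 0.
Proof.
split.
  case=> s Hs; exists (fun w => (count_mem w s)%:R) => u.
  by rewrite -(Hs u) A_play_sum seq_vec.
case=> x Hx; exists (seq_of x) => u.
by rewrite A_play_sum vec_seq Hx.
Qed.

Lemma N_play_sum s pi u : @N_play l T (compl_rel e) s pi u =
   pi u + \sum_(w <- s) ((u == w) || compl_rel e w u)%:R.
Proof. exact: (foldl_sum (fun w u => ((u == w) || compl_rel e w u)%:R)). Qed.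

Lemma compl_simp w u : ((u == w) || compl_rel e w u)%:R = 1 - (e w u)%:R :> Z.
Proof.
rewrite /compl_rel; case: (eqVneq u w) => [->|huw] /=.
  by rewrite eirr subr0.
rewrite eq_sym in huw; rewrite ?huw /=.
by case: (e w u); rewrite /= ?mulr1n ?mulr0n ?subrr ?subr0.
Qed.

Lemma N_win_iff pi : N_winnable l (compl_rel e) pi <->
   exists x, forall u, pi u + (\sum_w x w - Av x u) = 0.
Proof.
have E x u : \sum_w x w * ((u == w) || compl_rel e w u)%:R = \sum_w x w - Av x u.
  rewrite /Av -sumrB; apply: eq_bigr => w _; by rewrite compl_simp mulrBr mulr1.
split.
  case=> s Hs; exists (fun w => (count_mem w s)%:R) => u.
  by move: (Hs u); rewrite N_play_sum seq_vec E.
case=> x Hx; exists (seq_of x) => u.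
by rewrite N_play_sum vec_seq E Hx.
Qed.

Lemma Tog_iff (r t : Z) : in_TogNum l e [set: T] r t <->
  exists x, (forall u, r + Av x u = 0) /\ \sum_w x w = t.
Proof.
split.
  case=> s [Hs Ht]; exists (fun w => (count_mem w s)%:R); split.
    by move=> u; rewrite -(Hs u) A_play_sum seq_vec /lab_on in_setT.
  by rewrite -Ht count_setT [RHS]seq_vec; apply: eq_bigr => w _; rewrite mulr1.
case=> x [Hx Ht]; exists (seq_of x); split.
  by move=> u; rewrite A_play_sum vec_seq /lab_on in_setT Hx.
by rewrite count_setT vec_seq -Ht; apply: eq_bigr => w _; rewrite mulr1.
Qed.

Lemma AvD x1 x2 u : Av (fun w => x1 w + x2 w) u = Av x1 u + Av x2 u.
Proof. by rewrite /Av -big_split; apply: eq_bigr => w _; rewrite mulrDl. Qed.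
Lemma AvZ a x u : Av (fun w => a * x w) u = a * Av x u.
Proof. by rewrite /Av mulr_sumr; apply: eq_bigr => w _; rewrite mulrA. Qed.
Lemma AvN x u : Av (fun w => - x w) u = - Av x u.
Proof. by rewrite /Av -sumrN; apply: eq_bigr => w _; rewrite mulNr. Qed.
Lemma sumD (x1 x2 : T -> Z) : \sum_w (x1 w + x2 w) = \sum_w x1 w + \sum_w x2 w.
Proof. by rewrite big_split. Qed.
Lemma sumZ a (x : T -> Z) : \sum_w (a * x w) = a * \sum_w x w.
Proof. by rewrite mulr_sumr. Qed.

End Main.

Section Main2.
Variables (l : nat) (T : finType) (e : rel T).
Hypotheses (esym : symmetric e) (eirr : irreflexive e).
Local Notation Z := 'Z_l.

Lemma Av_lin (a b : Z) (x1 x2 : T -> Z) u :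
  Av e (fun w => a * x1 w + b * x2 w) u = a * Av e x1 u + b * Av e x2 u.
Proof.
rewrite /Av !mulr_sumr -big_split; apply: eq_bigr => w _.
by rewrite mulrDl !mulrA.
Qed.

Lemma sum_lin a b (x1 x2 : T -> Z) :
  \sum_w (a * x1 w + b * x2 w) = a * \sum_w x1 w + b * \sum_w x2 w.
Proof. by rewrite big_split /= !mulr_sumr. Qed.

Lemma part1 p v (hpv : e p v) (hpend : forall w, e p w -> w = v) :
  A_AW l e <-> A_AW l (induced_del2 e p v).
Proof.
have pv : p != v by apply/eqP => E; move: hpv; rewrite E eirr.
have vp : v != p by rewrite eq_sym.
have Avp (x : T -> Z) : Av e x p = x v.
  rewrite /Av (bigD1 v) //= esym hpv mulr1 big1 ?addr0 // => w /negbTE wv.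
  case ewp: (e w p); last by rewrite mulr0.
  by rewrite esym in ewp; rewrite (hpend _ ewp) eqxx in wv.
have Avy (x : T -> Z) (y : del2 p v) : Av e x (val y) =
    x v * (e v (val y))%:R + Av (induced_del2 e p v) (fun z => x (val z)) y.
  rewrite /Av (sum_del2 _ pv) /=.
  have -> : e p (val y) = false.
    apply/negbTE/negP => H; have := hpend _ H.
    by case/andP: (valP y) => _ /eqP.
  by rewrite mulr0 add0r.
split.
- move=> H b'; apply/A_win_iff.
  pose b (u : T) : Z := if insub u is Some y then b' y else 0.
  case/A_win_iff: (H b) => x Hx.
  have xv : x v = 0.
    by have := Hx p; rewrite Avp /b insubF ?add0r // eqxx.
  exists (fun z => x (val z)) => y.
  by have := Hx (val y); rewrite Avy xv mul0r add0r /b valK.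
- move=> H b; apply/A_win_iff.
  pose b' (y : del2 p v) := b (val y) - b p * (e v (val y))%:R.
  case/A_win_iff: (H b') => x' Hx'.
  pose xp := - (b v + \sum_(y : del2 p v) x' y * (e (val y) v)%:R).
  pose x w := if w == p then xp else if w == v then - b p
              else if insub w is Some y then x' y else 0.
  have xval y : x (val y) = x' y.
    by rewrite /x; case/andP: (valP y) => /negbTE -> /negbTE ->; rewrite valK.
  have xv : x v = - b p by rewrite /x (negbTE vp) eqxx.
  exists x => u.
  case: (eqVneq u p) => [->|up]; first by rewrite Avp xv subrr.
  case: (eqVneq u v) => [->|uv].
    rewrite /Av (sum_del2 _ pv) hpv eirr mulr1 mulr0 addr0.
    rewrite (eq_bigr (fun y : del2 p v => x' y * (e (val y) v)%:R)); last first.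
      by move=> y _; rewrite xval.
    by rewrite /x eqxx /xp; ring.
  have Hu : (u != p) && (u != v) by rewrite up uv.
  have -> : u = val (exist _ u Hu : del2 p v) by [].
  rewrite Avy xv.
  rewrite (_ : Av _ (fun z => x (val z)) _ = Av (induced_del2 e p v) x' (exist _ u Hu)); last first.
    by apply: eq_bigr => z _; rewrite xval.
  by move: (Hx' (exist _ u Hu)); rewrite /b' mulNr addrA.
Qed.

Lemma Rmult (r : nat) (t : Z) (hr : (0 < r)%N)
  (Hmin : forall r' : nat, (0 < r')%N -> (r' < r)%N ->
        ~ exists t0, in_TogNum l e [set: T] r'%:R t0)
  (Ht : in_TogNum l e [set: T] r%:R t) c y (Hy : forall u, Av e y u = c) :
  exists m : Z, c = m * r%:R.
Proof.
case/Tog_iff: Ht => x0 [Hx0 _].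
have Av0 u : Av e x0 u = - r%:R.
  by apply/eqP; rewrite -addr_eq0 addrC Hx0.
have cn : c = (nat_of_ord c)%:R by rewrite natr_Zp.
have := divn_eq (nat_of_ord c) r; have := ltn_pmod (nat_of_ord c) hr.
move: (nat_of_ord c %/ r)%N (nat_of_ord c %% r)%N => a b blt Hn.
rewrite Hn natrD natrM in cn.
case b0: (b == 0)%N.
  by exists a%:R; rewrite cn (eqP b0) addr0.
exfalso; apply: (Hmin b); [by rewrite lt0n b0 | exact: blt |].
exists (\sum_w ((-1) * y w + (- a%:R) * x0 w)); apply/Tog_iff.
exists (fun w => (-1) * y w + (- a%:R) * x0 w); split => // u.
rewrite Av_lin Hy Av0 cn; ring.
Qed.

Lemma part2 (r : nat) (t : Z) (hr : (0 < r)%N)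
  (Hmin : forall r' : nat, (0 < r')%N -> (r' < r)%N ->
        ~ exists t0, in_TogNum l e [set: T] r'%:R t0)
  (Ht : in_TogNum l e [set: T] r%:R t) :
     (N_AW l (compl_rel e) <->
        ((forall pi : T -> 'Z_l, exists s : 'Z_l, A_winnable l e (shift_lab pi s)) /\
         (forall z : 'Z_l, exists q : 'Z_l, in_TogNum l e [set: T] 0 q /\
             exists x : 'Z_l, (r%:R + t) * x = z + q))).
Proof.
case/Tog_iff: (Ht) => x0 [Hx0 Sx0].
have Av0 u : Av e x0 u = - r%:R.
  by apply/eqP; rewrite -addr_eq0 addrC Hx0.
split.
- move=> HN.
  have HN' (b : T -> Z) : exists x : T -> Z, forall u, b u + (\sum_w x w - Av e x u) = 0.
    exact: (proj1 (N_win_iff eirr b) (HN b)).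
  split.
  + move=> pi; have [x Hx] := HN' pi.
    exists (\sum_w x w); apply/A_win_iff.
    exists (fun w => - x w) => u; rewrite AvN /shift_lab.
    by have := Hx u; rewrite addrA.
  + move=> z; have [x Hx] := HN' (fun _ => z).
    have Hc u : Av e x u = z + \sum_w x w.
      by have := Hx u; move/eqP; rewrite addrA subr_eq0 => /eqP <-.
    have [m Hm] := Rmult hr Hmin Ht Hc.
    exists (\sum_w (1 * x w + m * x0 w)); split.
      apply/Tog_iff; exists (fun w => 1 * x w + m * x0 w); split => // u.
      by rewrite Av_lin Hc Av0 mul1r Hm; ring.
    exists m; rewrite sum_lin Sx0 mul1r addrA Hm; ring.
- case=> Ha Hb pi; apply/(N_win_iff eirr).
  have [s Hs] := Ha pi; case/A_win_iff: Hs => y Hy.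
  have [q [Hq [k Hk]]] := Hb (- \sum_w y w - s).
  case/Tog_iff: Hq => u0 [Hu0 Su0].
  exists (fun w => 1 * ((-1) * y w + (-k) * x0 w) + 1 * u0 w) => u.
  have Ay : Av e y u = - (pi u + s).
    by apply/eqP; rewrite -addr_eq0 addrC; have := Hy u; rewrite /shift_lab => ->.
  have Au0 : Av e u0 u = 0 by have := Hu0 u; rewrite add0r.
  rewrite Av_lin Av_lin sum_lin sum_lin Sx0 Su0 Av0 Ay Au0.
  have Hq' : q = (r%:R + t) * k + \sum_w y w + s by rewrite Hk; ring.
  rewrite Hq'; ring.
Qed.

End Main2.

Theorem theorem3p6 (l : nat) (hl : (1 < l)%N) (T : finType) (e : rel T)
  (esym : symmetric e) (eirr : irreflexive e)
  (p v : T) (hpv : e p v) (hpend : forall w, e p w -> w = v) :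
  (A_AW l e <-> A_AW l (induced_del2 e p v)) /\
  (forall (r : nat) (t : 'Z_l),
     (0 < r)%N ->
     (exists t0, in_TogNum l e [set: T] r%:R t0) ->
     (forall r' : nat, (0 < r')%N -> (r' < r)%N ->
        ~ exists t0, in_TogNum l e [set: T] r'%:R t0) ->
     in_TogNum l e [set: T] r%:R t ->
     (N_AW l (compl_rel e) <->
        ((forall pi : T -> 'Z_l, exists s : 'Z_l, A_winnable l e (shift_lab pi s)) /\
         (forall z : 'Z_l, exists q : 'Z_l, in_TogNum l e [set: T] 0 q /\
             exists x : 'Z_l, (r%:R + t) * x = z + q)))).
Proof.
split; first exact: part1.
by move=> r t hr _ Hmin Ht; apply: part2.
Qed.
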